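(* $\mathrm{PoTF}_{\textsc{Min-Max}}=\Theta(\min(\tau,n))$, i.e., the price of temporal fairness with respect to the \textsc{Min-Max} objective is both $O(\min(\tau,n))$ and $\Omega(\min(\tau,n))$, where $n$ is the number of agents and $\tau$ the number of constraints.
   Context: An instance $\mathcal{I}=(N,P,T,(\mathbf{D}_i)_{i\in N})$ has agents $N=[n]$, projects $P$, timesteps $T=[\ell]$, and disapproval sets $D_{ik}\subseteq P$. An outcome is $\mathbf{o}=(o_1,\dots,o_\ell)\in P^\ell$; $\Pi(\mathcal{I})$ is the set of all outcomes. $d_i(\mathbf{o}^{(k)})=|\{t\in[k]:o_t\in D_{it}\}|$ and $d_i(\mathbf{o})=d_i(\mathbf{o}^{(\ell)})$. A set of constraints is $\mathbf{A}=\{(t_1,\lambda_1),\dots,(t_\tau,\lambda_\tau)\}$ with $t_j\in T$, $\lambda_j\in\{0,\dots,\ell\}$, $t_1\le\dots\le t_\tau$, $\lambda_1\le\dots\le\lambda_\tau$; $\Pi_{\mathbf{A}}(\mathcal{I})$ is the set of outcomes with $\max_{i\in N}d_i(\mathbf{o}^{(t)})\le\lambda$ for all $(t,\lambda)\in\mathbf{A}$, and $\mathbf{A}$ is feasible if $\Pi_{\mathbf{A}}(\mathcal{I})\neq\emptyset$. The \textsc{Min-Max}-value of $\mathbf{o}$ is $\max_{i\in N}d_i(\mathbf{o})$. The price of temporal fairness is $\mathrm{PoTF}_{\textsc{Min-Max}}=\sup_{\mathcal{I},\mathbf{A}\text{ feasible}}\frac{\min_{\mathbf{o}\in\Pi_{\mathbf{A}}(\mathcal{I})}\max_i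 d_i(\mathbf{o})}{\min_{\mathbf{o}\in\Pi(\mathcal{I})}\max_i d_i(\mathbf{o})}$, considered as a function of $n$ and $\tau$. *)

(* Defs.v *)
From mathcomp Require Import all_boot.
Set Implicit Arguments. Unset Strict Implicit. Unset Printing Implicit Defensive.

(* Agents N = 'I_n, timesteps T = [l] represented as 'I_l (timestep t+1 <-> t),
   projects a finite type P.  D i t = disapproval set of agent i at timestep t+1.
   An outcome is a finite function 'I_l -> P. *)

Section Temporal.
Variables (n l : nat) (P : finType).
Variable D : 'I_n -> 'I_l -> {set P}.

Definition dis (o : {ffun 'I_l -> P}) (i : 'I_n) (k : nat) : nat :=
  #|[set t : 'I_l | (t < k) && (o t \in D i t)]|.

Definition maxdis (o : {ffun 'I_l -> P}) (k : nat) : nat :=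
  \max_(i < n) dis o i k.

Definition minmax_cost (o : {ffun 'I_l -> P}) : nat := maxdis o l.

Definition satisfies (A : seq (nat * nat)) (o : {ffun 'I_l -> P}) : bool :=
  all (fun c => maxdis o c.1 <= c.2) A.

Definition feasible (A : seq (nat * nat)) : Prop :=
  exists o : {ffun 'I_l -> P}, satisfies A o.
End Temporal.

Definition constraint_set (l tau : nat) (A : seq (nat * nat)) : bool :=
  [&& size A == tau, uniq A,
      all (fun c => (1 <= c.1 <= l) && (c.2 <= l)) A,
      sorted leq (map fst A) & sorted leq (map snd A)].

(* Main.v *)
Require Import Defs.
From mathcomp Require Import all_boot zify.
Set Implicit Arguments. Unset Strict Implicit. Unset Printing Implicit Defensive.

Section Gen.
Variables (n l : nat) (P : finType) (D : 'I_n -> 'I_l -> {set P}).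

Definition w (o : {ffun 'I_l -> P}) (i : 'I_n) (t : nat) : nat :=
  if insub t is Some u then (o u \in D i u : nat) else 0.

Lemma w_lt o i t (ht : t < l) : w o i t = (o (Ordinal ht) \in D i (Ordinal ht)).
Proof. by rewrite /w insubT. Qed.

Lemma w_ge o i t : l <= t -> w o i t = 0.
Proof. by move=> h; rewrite /w insubF // ltnNge h. Qed.

Lemma w_val o i (u : 'I_l) : w o i u = (o u \in D i u).
Proof. by rewrite /w valK. Qed.

Lemma disE o i m : dis D o i m = \sum_(0 <= t < m) w o i t.
Proof.
rewrite /dis -sum1_card big_mkcond /=.
transitivity (\sum_(t < l) ((t < m) * w o i t)).
  apply: eq_bigr => t _; rewrite inE w_val.
  by case: (t < m); case: (o t \in D i t).
rewrite -(big_mkord xpredT (fun t => (t < m) * w o i t)).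
case: (leqP m l) => hml.
  rewrite (big_cat_nat (leq0n m) hml) /=.
  rewrite [X in _ + X]big1_seq ?addn0; last first.
    move=> t /andP[_]; rewrite mem_index_iota => /andP[h _]; by rewrite ltnNge h.
  apply: eq_big_nat => t /andP[_ ->]; by rewrite mul1n.
rewrite [RHS](big_cat_nat (leq0n l) (ltnW hml)) /=.
rewrite [X in _ = _ + X]big1_seq ?addn0; last first.
  move=> t /andP[_]; rewrite mem_index_iota => /andP[h _]; by rewrite w_ge.
apply: eq_big_nat => t /andP[_ h].
by rewrite (ltn_trans h hml) mul1n.
Qed.

Lemma sum_mono (F : nat -> nat) m1 m2 : m1 <= m2 ->
  \sum_(0 <= t < m1) F t <= \sum_(0 <= t < m2) F t.
Proof. move=> h; rewrite (big_cat_nat (leq0n m1) h) /=; exact: leq_addr. Qed.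

Lemma sum_term (F : nat -> nat) t m : t < m -> F t <= \sum_(0 <= x < m) F x.
Proof.
move=> h; apply: leq_trans (sum_mono F h).
by rewrite big_nat_recr //= leq_addl.
Qed.

Lemma dis_mono o i m1 m2 : m1 <= m2 -> dis D o i m1 <= dis D o i m2.
Proof. by move=> h; rewrite !disE; apply: sum_mono. Qed.

Lemma dis_le_l o i m : dis D o i m <= dis D o i l.
Proof.
rewrite !disE; case: (leqP m l) => h; first exact: sum_mono.
rewrite [X in X <= _](big_cat_nat (leq0n l) (ltnW h)) /= [X in _ + X <= _]big1_seq ?addn0 //.
move=> t /andP[_]; rewrite mem_index_iota => /andP[h1 _]; by rewrite w_ge.
Qed.

Lemma dis_le_cost o i m : dis D o i m <= minmax_cost D o.
Proof.
apply: leq_trans (dis_le_l o i m) _.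
rewrite /minmax_cost /maxdis; exact: (leq_bigmax i).
Qed.

Lemma ub_n A oF (hF : satisfies D A oF) o :
  exists oA, satisfies D A oA /\ minmax_cost D oA <= n * minmax_cost D o.
Proof.
pose oA := [ffun t => if [exists i, o t \in D i t] then oF t else o t].
exists oA; split.
  apply/allP => c hc; have hFc := allP hF c hc.
  apply/bigmax_leqP => i _.
  apply: leq_trans (leq_trans (leq_bigmax i) hFc).
  apply: subset_leq_card; apply/subsetP => t; rewrite !inE ffunE.
  case: existsP => [_|hn] /andP[-> h] //=.
  by case: hn; exists i.
apply/bigmax_leqP => i _; rewrite disE.
apply: (@leq_trans (\sum_(0 <= t < l) \sum_(j < n) w o j t)).
  apply: leq_sum => t _.
  case: (ltnP t l) => ht; last by rewrite w_ge.
  rewrite w_lt ffunE; case: existsP => [[j hj] | hn].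
    apply: leq_trans (leq_b1 _) _.
    have e : w o j t = 1 by rewrite w_lt hj.
    by rewrite (bigD1 j) //= e leq_addr.
  case hin : (o (Ordinal ht) \in D i (Ordinal ht)) => //.
  by case: hn; exists i.
rewrite exchange_big /=.
apply: (@leq_trans (\sum_(j < n) minmax_cost D o)); last by rewrite sum_nat_const card_ord.
apply: leq_sum => j _; rewrite -disE; exact: dis_le_cost.
Qed.

Lemma exist_s oF L (A' : seq (nat * nat)) :
  (forall c, c \in A' -> maxdis D oF c.1 <= c.2) ->
  exists2 s, (forall c, c \in A' -> c.2 <= L -> c.1 <= s) &
             forall i, dis D oF i s <= L.
Proof.
elim: A' => [|c A' IH] hA.
  by exists 0 => // i; rewrite disE big_geq.
case: IH => [c' hc'|s h1 h2]; first by apply: hA; rewrite inE hc' orbT.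
case: (leqP c.2 L) => hcL.
  exists (maxn s c.1).
    move=> c'; rewrite inE => /orP[/eqP->|hc'] hle; first exact: leq_maxr.
    exact: leq_trans (h1 _ hc' hle) (leq_maxl _ _).
  move=> i; case: (leqP s c.1) => hs.
    idtac; apply: leq_trans hcL.
    apply: leq_trans (hA c (mem_head _ _)); exact: leq_bigmax.
  by [].
exists s => // c'; rewrite inE => /orP[/eqP->|hc'] hle; last exact: h1.
by move: hle; rewrite leqNgt hcL.
Qed.

Lemma ub_tau A oF (hF : satisfies D A oF) o :
  exists oA, satisfies D A oA /\ minmax_cost D oA <= (size A).+1 * minmax_cost D o.
Proof.
set K := minmax_cost D o.
have [L hL hgap] : exists2 L, L <= size A * K &
    forall c, c \in A -> (c.2 <= L) || (L + K <= c.2).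
  pose Bad := [set j : 'I_(size A).+1 | has (fun c : nat * nat => (j * K < c.2 < j * K + K)) A].
  have hB : #|Bad| <= size A.
    pose s := map (fun c : nat * nat => inord (c.2 %/ K) : 'I_(size A).+1) A.
    apply: (@leq_trans #|s|); last by apply: leq_trans (card_size s) _; rewrite size_map.
    apply: subset_leq_card; apply/subsetP => j; rewrite inE => /hasP[c hc /andP[h1 h2]].
    apply/mapP; exists c => //; apply: val_inj.
    have e : c.2 %/ K = j.
      have hK : 0 < K by lia.
      rewrite -(subnKC (ltnW h1)) divnMDl // divn_small ?addn0 //; lia.
    by rewrite /= e inordK // (ltn_ord j).
  case: (pickP (fun j => j \notin Bad)) => [j hj | hall]; last first.
    have : #|[set: 'I_(size A).+1]| <= #|Bad|.
      apply: subset_leq_card; apply/subsetP => x _; move: (hall x) => /= /negbFE //.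
    by rewrite cardsT card_ord => h; move: (leq_trans h hB); rewrite ltnn.
  exists (j * K); first by rewrite leq_mul2r -ltnS (ltn_ord j) orbT.
  move=> c hc; move: hj; rewrite inE => /hasPn /(_ c hc) => h; move: h; by rewrite negb_and -!leqNgt.
have [s hs1 hs2] := @exist_s oF L A (fun c hc => allP hF c hc).
pose oA := [ffun t : 'I_l => if t < s then oF t else o t].
have key1 : forall i m, m <= s -> dis D oA i m = dis D oF i m.
  move=> i m hm; rewrite !disE; apply: eq_big_nat => t /andP[_ ht].
  case: (ltnP t l) => htl; last by rewrite !w_ge.
  by rewrite !w_lt ffunE /= (leq_trans ht hm).
have key2 : forall i m, dis D oA i m <= L + K.
  move=> i m; case: (leqP m s) => hm.
    rewrite key1 //; apply: leq_trans (leq_addr K L).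
    by apply: leq_trans (dis_mono _ _ hm) (hs2 i).
  rewrite disE (big_cat_nat (leq0n s) (ltnW hm)) /=.
  apply: leq_add; first by rewrite -disE key1 //; exact: hs2.
  apply: (@leq_trans (\sum_(s <= t < m) w o i t)).
    rewrite leq_eqVlt; apply/orP; left; apply/eqP.
    apply: eq_big_nat => t /andP[ht _].
    case: (ltnP t l) => htl; last by rewrite !w_ge.
    by rewrite !w_lt ffunE /= ltnNge ht.
  apply: leq_trans (dis_le_cost o i m); rewrite disE.
  by rewrite [X in _ <= X](big_cat_nat (leq0n s) (ltnW hm)) /= leq_addl.
exists oA; split.
  apply/allP => c hc; apply/bigmax_leqP => i _.
  case/orP: (hgap c hc) => h.
    rewrite key1; last exact: hs1.
    apply: leq_trans (allP hF c hc); exact: leq_bigmax.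
  exact: leq_trans (key2 i _) h.
apply/bigmax_leqP => i _; apply: leq_trans (key2 i l) _.
rewrite mulSn addnC; exact: leq_add.
Qed.

End Gen.

Definition Dlb (n k l : nat) (i : 'I_n) (t : 'I_l) : {set bool} :=
  if t < k.*2 then [set p : bool | if p then (i == t./2 :> nat) else (i != t./2 :> nat)]
  else if (t == k.*2 :> nat) then setT else set0.

Section LB.
Variables (n k l : nat).
Hypothesis hkl : k.*2 < l.
Local Notation DD := (@Dlb n k l).

Lemma wD o (i : 'I_n) t (ht : t < l) :
  w DD o i t =
  nat_of_bool (if t < k.*2 then (if o (Ordinal ht) then (i == t./2 :> nat) else (i != t./2 :> nat))
   else (t == k.*2)).
Proof.
rewrite w_lt /Dlb /=; case: ifP => _; first by rewrite inE.
by case: ifP => _; rewrite ?inE.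
Qed.

Lemma tailD o i : dis DD o i l = \sum_(0 <= t < (k.*2).+1) w DD o i t.
Proof.
rewrite disE (big_cat_nat (leq0n (k.*2).+1) hkl) /= [X in _ + X]big1_seq ?addn0 //.
move=> t /andP[_]; rewrite mem_index_iota => /andP[h1 h2].
rewrite (wD o i h2) ltnNge (ltnW h1) /=.
by rewrite eq_sym ltn_eqF.
Qed.

Lemma w2k o i : w DD o i (k.*2) = 1.
Proof. by rewrite (wD o i hkl) ltnn eqxx. Qed.

Lemma feas_sum i m : m <= k ->
  \sum_(0 <= t < m.*2) w DD [ffun t : 'I_l => odd t] i t = m.
Proof.
elim: m => [|m IH] hm; first by rewrite big_geq.
have h1 : m.*2 < l by lia.
have h2 : (m.*2).+1 < l by lia.
rewrite doubleS big_nat_recr //= big_nat_recr //= IH ?(ltnW hm) //.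
rewrite (wD _ i h1) (wD _ i h2) !ffunE /= odd_double /=.
have -> : m.*2 < k.*2 by lia.
have -> : (m.*2).+1 < k.*2 by lia.
rewrite uphalf_double doubleK.
by case: (i == m :> nat); rewrite /= ?addn0 ?addn1.
Qed.

Lemma opt_sum i m : m <= k ->
  \sum_(0 <= t < m.*2) w DD [ffun t : 'I_l => true] i t = if i < m then 2 else 0.
Proof.
elim: m => [|m IH] hm; first by rewrite big_geq.
have h1 : m.*2 < l by lia.
have h2 : (m.*2).+1 < l by lia.
rewrite doubleS big_nat_recr //= big_nat_recr //= IH ?(ltnW hm) //.
rewrite (wD _ i h1) (wD _ i h2) !ffunE /=.
have -> : m.*2 < k.*2 by lia.
have -> : (m.*2).+1 < k.*2 by lia.
rewrite uphalf_double doubleK.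
rewrite [i < m.+1]ltnS [i <= m]leq_eqVlt.
case: (ltngtP i m) => //= h.
Qed.

Section Low.
Variable oA : {ffun 'I_l -> bool}.
Definition nb (t : nat) : nat := if insub t is Some u then ~~ (oA u) else false.

Lemma nb_lt t (ht : t < l) : nb t = ~~ oA (Ordinal ht).
Proof. by rewrite /nb insubT. Qed.

Lemma key_ne (i : 'I_n) t : t < k.*2 -> (t./2 != i) -> w DD oA i t = nb t.
Proof.
move=> ht hne; have htl : t < l by lia.
rewrite (wD oA i htl) (nb_lt htl) ht.
by case: (oA _); rewrite /= eq_sym (negbTE hne).
Qed.

Lemma key_eq (i : 'I_n) t : t < k.*2 -> (t./2 = i) -> w DD oA i t + nb t = 1.
Proof.
move=> ht he; have htl : t < l by lia.
rewrite (wD oA i htl) (nb_lt htl) ht he eqxx.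
by case: (oA _).
Qed.

Lemma lb_cost (A : seq (nat * nat))
  (hA : forall j, j < k -> ((j.+1).*2, j.+1) \in A) (hkn : k <= n) (hk : 0 < k)
  (hs : satisfies DD A oA) : k <= minmax_cost DD oA.
Proof.
have claim : forall j, j <= k -> j <= \sum_(0 <= t < j.*2) nb t.
  elim=> [//|j IH] hj.
  have hjn : j < n by lia.
  pose ij := Ordinal hjn.
  have hc := allP hs _ (hA j hj).
  have := leq_trans (leq_bigmax ij) hc.
  rewrite /= disE doubleS big_nat_recr //= big_nat_recr //= big_nat_recr //= big_nat_recr //=.
  have hIH := IH (ltnW hj).
  rewrite (@eq_big_nat _ _ _ 0 j.*2 _ nb); last first.
    move=> t /andP[_ ht]; apply: key_ne.
      by apply: leq_trans ht _; rewrite leq_double ltnW.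
    by rewrite /ij /=; apply: contraTneq ht => <-; rewrite -ltn_half_double ltnn.
  have e1 := @key_eq ij (j.*2) ltac:(lia) ltac:(by rewrite doubleK).
  have e2 := @key_eq ij (j.*2).+1 ltac:(lia) ltac:(by rewrite /= uphalf_double).
  lia.
have hkn' : k.-1 < n by lia.
pose i0 := Ordinal hkn'.
apply: leq_trans (leq_bigmax i0).
rewrite tailD big_nat_recr //= w2k.
have hk1 := claim k.-1 (leq_pred k).
apply: leq_trans (leq_add (leq_trans hk1 _) (leqnn 1)); first by lia.
apply: leq_trans (sum_mono _ (_ : (k.-1).*2 <= k.*2)); last by rewrite leq_double leq_pred.
rewrite leq_eqVlt; apply/orP; left; apply/eqP.
apply: eq_big_nat => t /andP[_ ht]; rewrite key_ne //.
  by apply: leq_trans ht _; rewrite leq_double leq_pred.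
by rewrite /i0 /=; apply: contraTneq ht => <-; rewrite -ltn_half_double ltnn.
Qed.
End Low.

End LB.

Theorem theorem8 :
  (exists C : nat,
     forall (n tau l : nat) (P : finType) (D : 'I_n -> 'I_l -> {set P})
            (A : seq (nat * nat)),
       0 < n -> 0 < tau -> constraint_set l tau A -> feasible D A ->
       forall o : {ffun 'I_l -> P},
       exists oA : {ffun 'I_l -> P},
         satisfies D A oA /\
         minmax_cost D oA <= C * minn tau n * minmax_cost D o)
  /\
  (exists a b : nat, 0 < a /\ 0 < b /\
     forall n tau : nat, 0 < n -> 0 < tau ->
     exists (l : nat) (P : finType) (D : 'I_n -> 'I_l -> {set P})
            (A : seq (nat * nat)),
       constraint_set l tau A /\ feasible D A /\
       (forall o : {ffun 'I_l -> P}, 0 < minmax_cost D o) /\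
       exists o : {ffun 'I_l -> P},
         forall oA : {ffun 'I_l -> P}, satisfies D A oA ->
           a * minn tau n * minmax_cost D o <= b * minmax_cost D oA).
Proof.
split.
  exists 2 => n tau l P D A hn htau hA [oF hF] o.
  have hsz : size A = tau by case/and5P: hA => /eqP.
  case: (leqP n tau) => h.
    have [oA [h1 h2]] := ub_n hF o.
    exists oA; split => //; apply: leq_trans h2 _; nia.
  have [oA [h1 h2]] := ub_tau hF o.
  exists oA; split => //; apply: leq_trans h2 _.
  rewrite hsz; nia.
exists 1, 3; split => //; split => //.
move=> n tau hn htau.
set k := minn tau n.
have hkt : k <= tau by rewrite /k geq_minl.
have hkn : k <= n by rewrite /k geq_minr.
have hk : 0 < k by rewrite /k leq_min htau hn.
set l := (tau + k.*2).+1.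
have hkl : k.*2 < l by rewrite /l ltnS leq_addl.
have htl : tau < l by rewrite /l ltnS leq_addr.
pose A := [seq (if j < k then (j.+1).*2 else l, j.+1) | j <- iota 0 tau].
have hA : forall j, j < k -> ((j.+1).*2, j.+1) \in A.
  move=> j hj; apply/mapP; exists j; last by rewrite hj.
  rewrite mem_iota; lia.
exists l, bool, (@Dlb n k l), A.
split.
  rewrite /constraint_set size_map size_iota eqxx /=.
  apply/and4P; split.
  - rewrite map_inj_uniq ?iota_uniq // => x y /(congr1 snd) /= [] //.
  - apply/allP => c /mapP[j]; rewrite mem_iota => hj -> /=; case: ifP => hjk; lia.
  - rewrite -map_comp.
    apply: homo_sorted; last exact: iota_sorted.
    move=> x y /= hxy; case: ifP => hx; case: ifP => hy; lia.
  - rewrite -map_comp.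
    apply: homo_sorted; last exact: iota_sorted.
    by move=> x y /=; rewrite ltnS.
split.
  exists [ffun t : 'I_l => odd t].
  apply/allP => c /mapP[j]; rewrite mem_iota => hj -> /=.
  apply/bigmax_leqP => i _; case: ifP => hjk.
    by rewrite disE (feas_sum hkl).
  rewrite (tailD hkl) big_nat_recr //= (w2k hkl) (feas_sum hkl) //; lia.
split.
  move=> o; apply: leq_trans (leq_bigmax (Ordinal hn)).
  by rewrite (tailD hkl) big_nat_recr //= (w2k hkl) addn1.
exists [ffun => true] => oA hs.
have hc : minmax_cost (@Dlb n k l) [ffun => true] <= 3.
  apply/bigmax_leqP => i _; rewrite (tailD hkl) big_nat_recr //= (w2k hkl) (opt_sum hkl) //.
  by case: ifP.
have hl := lb_cost hkl hA hkn hk hs.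
rewrite mul1n; nia.
Qed.
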